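(* Let $E$ be a pseudo effect algebra satisfying (RDP), let $s_1,s_2\in\mathcal S(E)$, and let $F_1,F_2$ be the faces of $\mathcal S(E)$ generated by $s_1$ and $s_2$ respectively. The following are equivalent: (i) $F_1\cap F_2=\emptyset$; (ii) $s_1\wedge s_2=0$ in $\mathcal J(E)$; (iii) $s_1\vee s_2=s_1+s_2$ in $\mathcal J(E)$; (iv) for every $x\in E$ and every $\epsilon>0$ there exist $x_1,x_2\in E$ with $x=x_1+x_2$, $s_1(x)-s_1(x_1)<\epsilon$ and $s_2(x)-s_2(x_2)<\epsilon$. In particular, if $s_1,s_2$ are two distinct extremal states of $E$, then $s_1\wedge s_2=0$.
   Context: Pseudo effect algebra: partial algebra $(E;+,0,1)$ such that for all $a,b,c$: (i) $a+b$ and $(a+b)+c$ exist iff $b+c$ and $a+(b+c)$ exist, and then they are equal; (ii) there is exactly one $d$ and one $e$ with $a+d=e+a=1$; (iii) if $a+b$ exists there are $d,e$ with $a+b=d+a=b+e$; (iv) if $1+a$ or $a+1$ exists then $a=0$. (RDP): whenever $a_1+a_2=b_1+b_2$ there are $d_1,\dots,d_4$ with $d_1+d_2=a_1$, $d_3+d_4=a_2$, $d_1+d_3=b_1$, $d_2+d_4=b_2$. Signed measure: $m:E\to\mathbb R$ additive on defined sums; measure: nonnegative signed measure; state: measure with $s(1)=1$; $\mathcal S(E)$: set of states; extremal state: extreme point of the convex set $\mathcal S(E)$. $\mathcal J(E)$: signed measures that are differences of two measures, ordered by $m_1\le^+m_2$ iff $m_2-m_1$ is a measure; under (RDP) it is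 a lattice-ordered group, and $\wedge,\vee$ refer to this lattice. A face of a convex set $K$ is a convex $F\subseteq K$ such that $\lambda x_1+(1-\lambda)x_2\in F$, $x_1,x_2\in K$, $0<\lambda<1$ imply $x_1,x_2\in F$; the face generated by a point is the smallest face containing it. *)

(* Defs.v *)
From Stdlib Require Import Reals.
Open Scope R_scope.

Section PEA.
Variable E : Type.
Variable plus : E -> E -> option E.   (* partial addition: None = undefined *)
Variables zero one : E.

Definition oplus (x y : option E) : option E :=
  match x, y with Some a, Some b => plus a b | _, _ => None end.

Definition defined (x : option E) : Prop := x <> None.

Definition is_PEA : Prop :=
  (* (i) (a+b)+c defined iff a+(b+c) defined, and then equal *)
  (forall a b c, oplus (plus a b) (Some c) = oplus (Some a) (plus b c)) /\
  (forall a, (exists! d, plus a d = Some one) /\ (exists! e, plus e a = Some one)) /\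
  (forall a b ab, plus a b = Some ab ->
     exists d e, plus d a = Some ab /\ plus b e = Some ab) /\
  (forall a, defined (plus one a) \/ defined (plus a one) -> a = zero).

Definition RDP : Prop :=
  forall a1 a2 b1 b2 c, plus a1 a2 = Some c -> plus b1 b2 = Some c ->
  exists d1 d2 d3 d4,
    plus d1 d2 = Some a1 /\ plus d3 d4 = Some a2 /\
    plus d1 d3 = Some b1 /\ plus d2 d4 = Some b2.

Definition signed_measure (m : E -> R) : Prop :=
  forall a b c, plus a b = Some c -> m c = m a + m b.

Definition measure (m : E -> R) : Prop :=
  signed_measure m /\ forall a, 0 <= m a.

Definition state (s : E -> R) : Prop := measure s /\ s one = 1.

Definition in_J (m : E -> R) : Prop :=
  exists m1 m2, measure m1 /\ measure m2 /\ forall a, m a = m1 a - m2 a.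

Definition leJ (m1 m2 : E -> R) : Prop := measure (fun a => m2 a - m1 a).

Definition is_meetJ (m1 m2 m : E -> R) : Prop :=
  in_J m /\ leJ m m1 /\ leJ m m2 /\
  forall k, in_J k -> leJ k m1 -> leJ k m2 -> leJ k m.

Definition is_joinJ (m1 m2 m : E -> R) : Prop :=
  in_J m /\ leJ m1 m /\ leJ m2 m /\
  forall k, in_J k -> leJ m1 k -> leJ m2 k -> leJ m k.

Definition convcomb (l : R) (x1 x2 : E -> R) : E -> R :=
  fun a => l * x1 a + (1 - l) * x2 a.

Definition face (F : (E -> R) -> Prop) : Prop :=
  (forall x, F x -> state x) /\
  (forall l x1 x2, 0 <= l <= 1 -> F x1 -> F x2 -> F (convcomb l x1 x2)) /\
  (forall l x1 x2, state x1 -> state x2 -> 0 < l < 1 ->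
     F (convcomb l x1 x2) -> F x1 /\ F x2).

Definition face_gen (s : E -> R) : (E -> R) -> Prop :=
  fun t => forall F, face F -> F s -> F t.

Definition extremal_state (s : E -> R) : Prop :=
  state s /\
  forall l x1 x2, state x1 -> state x2 -> 0 < l < 1 ->
    s = convcomb l x1 x2 -> x1 = s /\ x2 = s.

End PEA.
Arguments is_PEA {E}.
Arguments RDP {E}.
Arguments state {E}.
Arguments is_meetJ {E}.
Arguments is_joinJ {E}.
Arguments face_gen {E}.
Arguments extremal_state {E}.

(* Main.v *)
Require Import Defs.
From Stdlib Require Import Reals Lra Classical FunctionalExtensionality.
Open Scope R_scope.

Lemma pea_zero (E:Type) (plus : E -> E -> option E) (zero one : E)
  (HE : is_PEA plus zero one) (x : E) :
  plus x zero = Some x /\ plus zero x = Some x.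
Proof.
  destruct HE as [Ha [Hc [Hiii Hiv]]].
  assert (H1z : plus one zero = Some one).
  { destruct (proj1 (Hc one)) as [d [Hd _]].
    assert (d = zero) by (apply Hiv; left; unfold defined; rewrite Hd; discriminate).
    subst; exact Hd. }
  assert (Hz1 : plus zero one = Some one).
  { destruct (proj2 (Hc one)) as [d [Hd _]].
    assert (d = zero) by (apply Hiv; right; unfold defined; rewrite Hd; discriminate).
    subst; exact Hd. }
  split.
  - destruct (proj2 (Hc x)) as [e [He _]].
    pose proof (Ha e x zero) as H. rewrite He in H. simpl in H. rewrite H1z in H.
    destruct (plus x zero) as [c|] eqn:Hxc; simpl in H; [|discriminate].
    destruct (proj1 (Hc e)) as [d [_ Hdu]].
    rewrite <- (Hdu x He), <- (Hdu c (eq_sym H)). reflexivity.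
  - destruct (proj1 (Hc x)) as [d [Hd _]].
    pose proof (Ha zero x d) as H. rewrite Hd in H. simpl in H. rewrite Hz1 in H.
    destruct (plus zero x) as [c|] eqn:Hc'; simpl in H; [|discriminate].
    destruct (proj2 (Hc d)) as [e [_ Heu]].
    rewrite <- (Heu x Hd), <- (Heu c H). reflexivity.
Qed.

Lemma meas_le_one (E:Type) (plus : E -> E -> option E) (zero one : E)
  (HE : is_PEA plus zero one) m :
  measure E plus m -> forall x, m x <= m one.
Proof.
  intros [Sm Pm] x. destruct HE as [_ [Hc _]].
  destruct (proj1 (Hc x)) as [d [Hd _]].
  rewrite (Sm _ _ _ Hd). specialize (Pm d). lra.
Qed.

Lemma sm0 E plus : signed_measure E plus (fun _ => 0).
Proof. intros x y z _. ring. Qed.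

Lemma sm_add E plus f g : signed_measure E plus f -> signed_measure E plus g ->
  signed_measure E plus (fun a => f a + g a).
Proof. intros Hf Hg x y z H. rewrite (Hf _ _ _ H), (Hg _ _ _ H). ring. Qed.

Lemma sm_sub E plus f g : signed_measure E plus f -> signed_measure E plus g ->
  signed_measure E plus (fun a => f a - g a).
Proof. intros Hf Hg x y z H. rewrite (Hf _ _ _ H), (Hg _ _ _ H). ring. Qed.

Lemma sm_scal E plus c f : signed_measure E plus f ->
  signed_measure E plus (fun a => c * f a).
Proof. intros Hf x y z H. rewrite (Hf _ _ _ H). ring. Qed.

Lemma leJ_intro E plus f g : signed_measure E plus f -> signed_measure E plus g ->
  (forall a, f a <= g a) -> leJ E plus f g.
Proof.
  intros Hf Hg H. split.
  - intros x y z Hz. rewrite (Hf _ _ _ Hz), (Hg _ _ _ Hz). ring.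
  - intro a. specialize (H a). lra.
Qed.

Lemma leJ_elim E plus f g : leJ E plus f g -> forall a, f a <= g a.
Proof. intros [_ H] a. specialize (H a). cbv beta in H. lra. Qed.

Lemma inJ_sm E plus k : in_J E plus k -> signed_measure E plus k.
Proof.
  intros [m1 [m2 [[S1 _] [[S2 _] H]]]] x y z Hz.
  rewrite !H, (S1 _ _ _ Hz), (S2 _ _ _ Hz). ring.
Qed.

Lemma meet_ex (E:Type) (plus : E -> E -> option E) (zero one : E)
  (HE : is_PEA plus zero one) (HR : RDP plus) s1 s2 :
  measure E plus s1 -> measure E plus s2 ->
  exists m : E -> R, measure E plus m /\ (forall x, m x <= s1 x) /\ (forall x, m x <= s2 x) /\
   (forall k, signed_measure E plus k -> (forall x, k x <= s1 x) -> (forall x, k x <= s2 x) ->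
      forall x, k x <= m x) /\
   (forall x eps, 0 < eps -> exists x1 x2, plus x1 x2 = Some x /\ s2 x1 + s1 x2 < m x + eps).
Proof.
  intros [S1 P1] [S2 P2].
  pose proof (pea_zero E plus zero one HE) as HZ.
  destruct HE as [Ha [Hc [Hiii Hiv]]].
  assert (Z1 : s1 zero = 0) by (pose proof (S1 _ _ _ (proj1 (HZ zero))); lra).
  assert (Z2 : s2 zero = 0) by (pose proof (S2 _ _ _ (proj1 (HZ zero))); lra).
  set (S := fun x y => exists x1 x2, plus x1 x2 = Some x /\ y = - (s2 x1 + s1 x2)).
  assert (Hl : forall x, {l | is_lub (S x) l}).
  { intro x. apply completeness.
    - exists 0. intros y [x1 [x2 [_ ->]]]. specialize (P1 x2); specialize (P2 x1); lra.
    - exists (- (s2 zero + s1 x)). exists zero, x. split; [apply HZ | reflexivity]. }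
  assert (Hm : exists m : E -> R, forall x,
     (forall x1 x2, plus x1 x2 = Some x -> m x <= s2 x1 + s1 x2) /\
     (forall r, (forall x1 x2, plus x1 x2 = Some x -> r <= s2 x1 + s1 x2) -> r <= m x)).
  { exists (fun x => - proj1_sig (Hl x)). intro x. destruct (Hl x) as [l [Hub Hlst]]. simpl. split.
    - intros x1 x2 H. assert (-(s2 x1 + s1 x2) <= l) by (apply Hub; exists x1, x2; auto). lra.
    - intros r Hr. assert (l <= - r).
      { apply Hlst. intros y [x1 [x2 [H ->]]]. specialize (Hr x1 x2 H). lra. }
      lra. }
  destruct Hm as [m Hm].
  assert (G1 : forall x x1 x2, plus x1 x2 = Some x -> m x <= s2 x1 + s1 x2)
    by (intros; apply (proj1 (Hm x)); auto).
  assert (G2 : forall x r, (forall x1 x2, plus x1 x2 = Some x -> r <= s2 x1 + s1 x2) -> r <= m x)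
    by (intros; apply (proj2 (Hm x)); auto).
  clear Hm.
  assert (Le1 : forall x, m x <= s1 x).
  { intro x. pose proof (G1 x zero x (proj2 (HZ x))). lra. }
  assert (Le2 : forall x, m x <= s2 x).
  { intro x. pose proof (G1 x x zero (proj1 (HZ x))). lra. }
  assert (Pos : forall x, 0 <= m x).
  { intro x. apply G2. intros x1 x2 _. specialize (P1 x2); specialize (P2 x1); lra. }
  assert (Add : signed_measure E plus m).
  { intros a b ab Hab. apply Rle_antisym.
    - assert (H : forall a1 a2, plus a1 a2 = Some a -> forall b1 b2, plus b1 b2 = Some b ->
                m ab <= s2 a1 + s1 a2 + (s2 b1 + s1 b2)).
      { intros a1 a2 Ha1 b1 b2 Hb1.
        pose proof (Ha a1 a2 b) as A1. rewrite Ha1 in A1. simpl in A1. rewrite Hab in A1.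
        destruct (plus a2 b) as [w|] eqn:Hw; simpl in A1; [|discriminate].
        pose proof (Ha a2 b1 b2) as A2. rewrite Hb1 in A2. simpl in A2. rewrite Hw in A2.
        destruct (plus a2 b1) as [c|] eqn:Hcc; simpl in A2; [|discriminate].
        destruct (Hiii a2 b1 c Hcc) as [d [e [Hd _]]].
        pose proof (Ha d a2 b2) as A3. rewrite Hd in A3. simpl in A3. rewrite A2 in A3.
        destruct (plus a2 b2) as [y2|] eqn:Hy2; simpl in A3; [|discriminate].
        pose proof (Ha a1 d y2) as A4. rewrite <- A3 in A4. simpl in A4. rewrite <- A1 in A4.
        destruct (plus a1 d) as [y1|] eqn:Hy1; simpl in A4; [|discriminate].
        pose proof (G1 _ _ _ A4) as H.
        rewrite (S2 _ _ _ Hy1), (S1 _ _ _ Hy2) in H.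
        pose proof (S2 _ _ _ Hd). pose proof (S2 _ _ _ Hcc). lra. }
      assert (m ab - m b <= m a).
      { apply G2. intros a1 a2 Ha1.
        assert (m ab - (s2 a1 + s1 a2) <= m b).
        { apply G2. intros b1 b2 Hb. specialize (H a1 a2 Ha1 b1 b2 Hb). lra. }
        lra. }
      lra.
    - apply G2. intros y1 y2 Hy.
      destruct (HR a b y1 y2 ab Hab Hy) as [d1 [d2 [d3 [d4 [E1 [E2 [E3 E4]]]]]]].
      pose proof (G1 _ _ _ E1). pose proof (G1 _ _ _ E2).
      rewrite (S2 _ _ _ E3), (S1 _ _ _ E4). lra. }
  exists m. split; [split; auto|]. split; [auto|]. split; [auto|]. split.
  - intros k Hk K1 K2 x. apply G2. intros x1 x2 H. rewrite (Hk _ _ _ H).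
    specialize (K2 x1); specialize (K1 x2); lra.
  - intros x eps Heps.
    destruct (classic (exists x1 x2, plus x1 x2 = Some x /\ s2 x1 + s1 x2 < m x + eps))
      as [Hx|Hn]; auto.
    exfalso. assert (m x + eps <= m x); [|lra]. apply G2. intros x1 x2 H.
    destruct (Rlt_or_le (s2 x1 + s1 x2) (m x + eps)) as [Hl'|Hl']; auto.
    exfalso; apply Hn; exists x1, x2; auto.
Qed.

Lemma face_gen_bound (E:Type) (plus : E -> E -> option E) (one : E) s t :
  state plus one s -> face_gen plus one s t ->
  state plus one t /\ exists c, 0 < c /\ forall a, c * t a <= s a.
Proof.
  intros Hs H.
  apply (H (fun t => state plus one t /\ exists c, 0 < c /\ forall a, c * t a <= s a)).
  - split; [intros x [Hx _]; exact Hx|split].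
    + intros l x1 x2 Hl [Hx1 [c1 [Hc1 B1]]] [Hx2 [c2 [Hc2 B2]]].
      destruct Hx1 as [[Sx1 Px1] O1]. destruct Hx2 as [[Sx2 Px2] O2].
      split.
      * split; [split|].
        -- intros x y z Hz. unfold convcomb. rewrite (Sx1 _ _ _ Hz), (Sx2 _ _ _ Hz). ring.
        -- intro a. unfold convcomb. specialize (Px1 a); specialize (Px2 a). nra.
        -- unfold convcomb. rewrite O1, O2. ring.
      * exists (Rmin c1 c2). split; [apply Rmin_glb_lt; auto|]. intro a.
        assert (A1 : Rmin c1 c2 * x1 a <= s a).
        { apply Rle_trans with (c1 * x1 a); [apply Rmult_le_compat_r; [apply Px1|apply Rmin_l]|apply B1]. }
        assert (A2 : Rmin c1 c2 * x2 a <= s a).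
        { apply Rle_trans with (c2 * x2 a); [apply Rmult_le_compat_r; [apply Px2|apply Rmin_r]|apply B2]. }
        unfold convcomb. nra.
    + intros l x1 x2 Hx1 Hx2 Hl [_ [c [Hc B]]].
      pose proof Hx1 as [[_ Px1] _]. pose proof Hx2 as [[_ Px2] _].
      split; split; auto.
      * exists (c * l). split; [nra|]. intro a. specialize (B a). unfold convcomb in B.
        specialize (Px2 a). destruct Hl.
        assert (0 <= c * (1 - l) * x2 a) by (apply Rmult_le_pos; [nra|auto]). nra.
      * exists (c * (1 - l)). split; [nra|]. intro a. specialize (B a). unfold convcomb in B.
        specialize (Px1 a). destruct Hl.
        assert (0 <= c * l * x1 a) by (apply Rmult_le_pos; [nra|auto]). nra.
  - split; auto. exists 1. split; [lra|]. intro a. lra.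
Qed.

Lemma in_face_gen (E:Type) (plus : E -> E -> option E) (one : E) s t c :
  state plus one s -> state plus one t -> 0 < c <= 1 -> (forall a, c * t a <= s a) ->
  face_gen plus one s t.
Proof.
  intros Hs Ht Hc B F HF HFs.
  destruct HF as [_ [_ Hext]].
  pose proof Hs as [[Ss Ps] Os]. pose proof Ht as [[St Pt] Ot].
  set (z := fun a => (s a - c/2 * t a) / (1 - c/2)).
  assert (Hz : state plus one z).
  { split; [split|].
    - intros x y w H. unfold z. rewrite (Ss _ _ _ H), (St _ _ _ H). field. lra.
    - intro a. unfold z. unfold Rdiv. apply Rmult_le_pos.
      + specialize (B a). specialize (Pt a). nra.
      + left. apply Rinv_0_lt_compat. lra.
    - unfold z. rewrite Os, Ot. field. lra. }
  assert (Heq : s = convcomb E (c/2) t z).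
  { apply functional_extensionality; intro a. unfold convcomb, z. field. lra. }
  rewrite Heq in HFs. apply (Hext (c/2) t z Ht Hz) in HFs; [tauto | lra].
Qed.

Lemma gen_extremal (E:Type) (plus : E -> E -> option E) (one : E) s t :
  extremal_state plus one s -> face_gen plus one s t -> t = s.
Proof.
  intros [Hs Hx] H. apply (H (fun t => t = s)); [|reflexivity].
  split; [intros x ->; exact Hs|split].
  - intros l x1 x2 _ -> ->. unfold convcomb. apply functional_extensionality; intro; ring.
  - intros l x1 x2 H1 H2 Hl Heq. apply (Hx l x1 x2 H1 H2 Hl). symmetry; exact Heq.
Qed.

Lemma part1 (E : Type) (plus : E -> E -> option E) (zero one : E)
  (HE : is_PEA plus zero one) (HR : RDP plus) :
  (forall s1 s2 : E -> R,
     state plus one s1 -> state plus one s2 ->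
     let F1 := face_gen plus one s1 in
     let F2 := face_gen plus one s2 in
     ((forall t, ~ (F1 t /\ F2 t)) <-> is_meetJ plus s1 s2 (fun _ => 0)) /\
     (is_meetJ plus s1 s2 (fun _ => 0) <-> is_joinJ plus s1 s2 (fun a => s1 a + s2 a)) /\
     (is_joinJ plus s1 s2 (fun a => s1 a + s2 a) <->
        (forall x eps, 0 < eps -> exists x1 x2,
           plus x1 x2 = Some x /\ s1 x - s1 x1 < eps /\ s2 x - s2 x2 < eps))).
Proof.
  intros s1 s2 Hs1 Hs2 F1 F2.
  pose proof Hs1 as [[S1 P1] O1]. pose proof Hs2 as [[S2 P2] O2].
  destruct (meet_ex E plus zero one HE HR s1 s2 (proj1 Hs1) (proj1 Hs2))
    as [m [[Sm Pm] [L1 [L2 [Kb Apx]]]]].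
  assert (M0 : measure E plus (fun _ => 0)) by (split; [apply sm0 | intro; lra]).
  assert (Zii : is_meetJ plus s1 s2 (fun _ => 0) <-> (forall x, m x <= 0)).
  { split.
    - intros [_ [_ [_ H]]] x.
      assert (HH : leJ E plus m (fun _ => 0)).
      { apply H.
        + exists m, (fun _ => 0). split; [split; auto|split; [exact M0|intro; ring]].
        + apply leJ_intro; auto.
        + apply leJ_intro; auto. }
      pose proof (leJ_elim _ _ _ _ HH x). simpl in *. lra.
    - intro Z. split; [|split; [|split]].
      + exists (fun _ => 0), (fun _ => 0). split; [exact M0|split; [exact M0|intro; ring]].
      + apply leJ_intro; [apply sm0 | exact S1 | intro a; apply P1].
      + apply leJ_intro; [apply sm0 | exact S2 | intro a; apply P2].
      + intros k Hk K1 K2. apply leJ_intro; [apply inJ_sm; auto | apply sm0 |].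
        intro a.
        pose proof (Kb k (inJ_sm _ _ _ Hk) (leJ_elim _ _ _ _ K1) (leJ_elim _ _ _ _ K2) a).
        specialize (Z a). lra. }
  assert (Ziii : is_joinJ plus s1 s2 (fun a => s1 a + s2 a) <-> (forall x, m x <= 0)).
  { split.
    - intros [_ [_ [_ H]]] x.
      assert (HH : leJ E plus (fun a => s1 a + s2 a) (fun a => s1 a + s2 a - m a)).
      { apply H.
        + exists (fun a => s1 a + s2 a), m.
          split; [split; [apply sm_add; auto|intro a; specialize (P1 a); specialize (P2 a); lra]|].
          split; [split; auto|intro; reflexivity].
        + apply leJ_intro; [auto|apply sm_sub; [apply sm_add|]; auto|].
          intro a; specialize (L2 a); lra.
        + apply leJ_intro; [auto|apply sm_sub; [apply sm_add|]; auto|].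
          intro a; specialize (L1 a); lra. }
      pose proof (leJ_elim _ _ _ _ HH x). simpl in *. lra.
    - intro Z. split; [|split; [|split]].
      + exists (fun a => s1 a + s2 a), (fun _ => 0).
        split; [split; [apply sm_add; auto|intro a; specialize (P1 a); specialize (P2 a); lra]|].
        split; [exact M0|intro; ring].
      + apply leJ_intro; [auto|apply sm_add; auto|intro a; specialize (P2 a); lra].
      + apply leJ_intro; [auto|apply sm_add; auto|intro a; specialize (P1 a); lra].
      + intros k Hk K1 K2. pose proof (inJ_sm _ _ _ Hk) as Sk.
        apply leJ_intro; [apply sm_add; auto|auto|].
        intro a.
        assert (Hb : forall x, (fun a => s1 a + s2 a - k a) x <= m x).
        { apply Kb.
          - apply sm_sub; [apply sm_add|]; auto.
          - intro x. pose proof (leJ_elim _ _ _ _ K2 x). simpl. lra.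
          - intro x. pose proof (leJ_elim _ _ _ _ K1 x). simpl. lra. }
        specialize (Hb a). simpl in Hb. specialize (Z a). lra. }
  assert (Ziv : (forall x eps, 0 < eps -> exists x1 x2,
           plus x1 x2 = Some x /\ s1 x - s1 x1 < eps /\ s2 x - s2 x2 < eps) <->
           (forall x, m x <= 0)).
  { split.
    - intros H x. apply Rnot_lt_le; intro Hpos.
      destruct (H x (m x / 2)) as [x1 [x2 [Hx [A B]]]]; [lra|].
      pose proof (S1 _ _ _ Hx). pose proof (S2 _ _ _ Hx). pose proof (Sm _ _ _ Hx).
      specialize (L2 x1). specialize (L1 x2). lra.
    - intros Z x eps Heps. destruct (Apx x eps Heps) as [x1 [x2 [Hx Hlt]]].
      exists x1, x2. split; auto.
      pose proof (S1 _ _ _ Hx). pose proof (S2 _ _ _ Hx).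
      specialize (P1 x2). specialize (P2 x1). specialize (Z x). specialize (Pm x). lra. }
  assert (Zi : (forall t, ~ (F1 t /\ F2 t)) <-> (forall x, m x <= 0)).
  { split.
    - intros Hi x. apply Rnot_lt_le; intro Hpos.
      pose proof (meas_le_one E plus zero one HE m (conj Sm Pm) x) as Hxo.
      set (c := m one) in *.
      assert (Hc1 : c <= 1) by (rewrite <- O1; apply L1).
      set (t := fun a => m a / c).
      assert (Ht : state plus one t).
      { split; [split|].
        - intros x' y z Hz. unfold t. rewrite (Sm _ _ _ Hz). field. lra.
        - intro a. unfold t, Rdiv. apply Rmult_le_pos; [apply Pm|].
          left. apply Rinv_0_lt_compat. lra.
        - unfold t. fold c. field. lra. }
      assert (Hct : forall a, c * t a = m a) by (intro a; unfold t; field; lra).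
      apply (Hi t). split.
      + apply (in_face_gen E plus one s1 t c); auto; [lra|].
        intro a. rewrite Hct. apply L1.
      + apply (in_face_gen E plus one s2 t c); auto; [lra|].
        intro a. rewrite Hct. apply L2.
    - intros Z t [H1 H2].
      destruct (face_gen_bound E plus one s1 t Hs1 H1) as [Ht [c1 [Hc1 B1]]].
      destruct (face_gen_bound E plus one s2 t Hs2 H2) as [_ [c2 [Hc2 B2]]].
      pose proof Ht as [[St Pt] Ot].
      assert (Hc : 0 < Rmin c1 c2) by (apply Rmin_glb_lt; auto).
      assert (Hb : forall x, (fun a => Rmin c1 c2 * t a) x <= m x).
      { apply Kb.
        - apply sm_scal; auto.
        - intro x. apply Rle_trans with (c1 * t x);
            [apply Rmult_le_compat_r; [apply Pt|apply Rmin_l]|apply B1].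
        - intro x. apply Rle_trans with (c2 * t x);
            [apply Rmult_le_compat_r; [apply Pt|apply Rmin_r]|apply B2]. }
      specialize (Hb one). simpl in Hb. rewrite Ot in Hb. specialize (Z one). lra. }
  split; [tauto|split; tauto].
Qed.

Theorem proposition4p2 (E : Type) (plus : E -> E -> option E) (zero one : E)
  (HE : is_PEA plus zero one) (HR : RDP plus) :
  (forall s1 s2 : E -> R,
     state plus one s1 -> state plus one s2 ->
     let F1 := face_gen plus one s1 in
     let F2 := face_gen plus one s2 in
     ((forall t, ~ (F1 t /\ F2 t)) <-> is_meetJ plus s1 s2 (fun _ => 0)) /\
     (is_meetJ plus s1 s2 (fun _ => 0) <-> is_joinJ plus s1 s2 (fun a => s1 a + s2 a)) /\
     (is_joinJ plus s1 s2 (fun a => s1 a + s2 a) <->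
        (forall x eps, 0 < eps -> exists x1 x2,
           plus x1 x2 = Some x /\ s1 x - s1 x1 < eps /\ s2 x - s2 x2 < eps))) /\
  (forall s1 s2 : E -> R,
     extremal_state plus one s1 -> extremal_state plus one s2 -> s1 <> s2 ->
     is_meetJ plus s1 s2 (fun _ => 0)).
Proof.
  split.
  - exact (part1 E plus zero one HE HR).
  - intros s1 s2 X1 X2 Hne.
    pose proof (part1 E plus zero one HE HR s1 s2 (proj1 X1) (proj1 X2)) as P.
    cbv zeta in P. destruct P as [[Hi _] _].
    apply Hi. intros t [T1 T2]. apply Hne.
    rewrite <- (gen_extremal E plus one s1 t X1 T1), <- (gen_extremal E plus one s2 t X2 T2).
    reflexivity.
Qed.
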